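(* Under the setting below, for parameters $\gamma\in(0,1)$ and $\delta>0$, the policy $\mathcal P$ satisfies, for every $k\in\mathcal K$, $$\mathbb E\big[V_{\rm ESP}(\mathcal P)\big]\ge(1-\gamma)\Big(1-\frac\delta2\Big)V_{\rm ESP}(k)-\Phi(\epsilon,\delta,\gamma).$$
   Context: Fix integers $N,T\ge1$ and reals $\bar c>0$, $p_{\min}>0$, $\epsilon>0$, $\bar E\ge p_{\min}(1+\epsilon)$. For each $n\in\{1,\dots,N\}$ and $t\in\{1,\dots,T\}$ fix $c_{n,t}\in[0,\bar c]$ and a response function $z_{n,t}:[p_{\min},\infty)\to[0,1]$, fixed in advance (not depending on the policy's random choices). Let $K=\lfloor\log_{1+\epsilon}(\bar E/p_{\min})\rfloor$, $\mathcal K=\{1,\dots,K\}$, $p(k)=p_{\min}(1+\epsilon)^k$, $V_{t,n}(k)=p(k)\,c_{n,t}\,z_{n,t}(p(k))$, $V_{\rm ESP}(k)=\sum_{n=1}^N\sum_{t=1}^TV_{t,n}(k)$, and $\mathcal S=\sum_{i=1}^K(1+\epsilon)^i$. Policy $\mathcal P$ with parameters $\gamma\in(0,1)$, $\delta>0$: set $\omega_1(k)=1$ for all $k$. For $t=1,\dots,T$: let $h_t(k)=(1-\gamma)\frac{\omega_t(k)}{\sum_{j=1}^K\omega_t(j)}+\gamma\frac{(1+\epsilon)^k}{\mathcal S}$; for each $n$ independently draw $\kappa_{t,n}\in\mathcal K$ with $\Pr[\kappa_{t,n}=k]=h_t(k)$, offer price $p(\kappa_{t,n})$ and receive $V_{t,n}(\kappa_{t,n})$;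 write $\kappa_t=(\kappa_{t,n})_n$; for each $k$ let $V_t(k,\kappa_t)=\sum_{n=1}^NV_{t,n}(\kappa_{t,n})\mathbf 1\{\kappa_{t,n}=k\}$, $\hat V_t(k,\kappa_t)=\frac{V_t(k,\kappa_t)}{N\bar c\,p_{\min}}\cdot\frac{\gamma}{h_t(k)\,\mathcal S}$, and $\omega_{t+1}(k)=\omega_t(k)(1+\delta)^{\hat V_t(k,\kappa_t)}$. The policy's total revenue is $V_{\rm ESP}(\mathcal P)=\sum_{n=1}^N\sum_{t=1}^TV_{t,n}(\kappa_{t,n})$. Define $\Phi(\epsilon,\delta,\gamma)=\frac{1-\gamma}{\gamma}\cdot\frac{1+\epsilon}{\epsilon}\cdot\frac{N\bar E\bar c}{\delta}\cdot\ln\!\Big(\frac{\ln(\bar E/p_{\min})}{\ln(1+\epsilon)}\Big)$. *)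

(* Defs.v *)
From HB Require Import structures.
From mathcomp Require Import all_boot all_order all_algebra.
From mathcomp Require Import all_classical all_reals all_analysis.
Unset Printing Implicit Defensive.
Import Order.TTheory GRing.Theory Num.Theory.
Local Open Scope ring_scope.

Section ESP.
Variable R : realType.

(* K = floor(log_{1+eps}(Ebar/pmin)); the argument is >= 1 under the
   hypotheses, so Num.truncn (floor on nonnegatives, as a nat) is the floor. *)
Definition Kn (pmin eps Ebar : R) : nat :=
  Num.truncn (ln (Ebar / pmin) / ln (1 + eps)).

Definition price (pmin eps : R) (k : nat) : R := pmin * (1 + eps) ^+ k.

(* c n t, z n t use the paper's 1-based indices n in 1..N, t in 1..T *)
Definition Vtn (pmin eps : R) (c : nat -> nat -> R) (z : nat -> nat -> R -> R)
  (t n k : nat) : R :=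
  price pmin eps k * c n t * z n t (price pmin eps k).

Definition V_ESP (N T : nat) (pmin eps : R) (c : nat -> nat -> R)
  (z : nat -> nat -> R -> R) (k : nat) : R :=
  \sum_(n < N) \sum_(t < T) Vtn pmin eps c z t.+1 n.+1 k.

(* Arms are i : 'I_K, standing for k = i.+1 in {1,..,K}. *)
Definition Ssum (eps : R) (K : nat) : R := \sum_(i < K) (1 + eps) ^+ i.+1.

Definition hprob (gamma eps : R) (K : nat) (w : {ffun 'I_K -> R}) (i : 'I_K) : R :=
  (1 - gamma) * (w i / \sum_(j < K) w j)
  + gamma * ((1 + eps) ^+ i.+1 / Ssum eps K).

Section Round.
Variables (N : nat) (cbar pmin eps gamma delta : R)
  (c : nat -> nat -> R) (z : nat -> nat -> R -> R) (K : nat).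

Definition round_rev (t : nat) (kappa : {ffun 'I_N -> 'I_K}) : R :=
  \sum_(n < N) Vtn pmin eps c z t n.+1 (kappa n).+1.

Definition Vt_arm (t : nat) (kappa : {ffun 'I_N -> 'I_K}) (i : 'I_K) : R :=
  \sum_(n < N) Vtn pmin eps c z t n.+1 (kappa n).+1 * (kappa n == i)%:R.

Definition Vhat (t : nat) (w : {ffun 'I_K -> R}) (kappa : {ffun 'I_N -> 'I_K})
  (i : 'I_K) : R :=
  Vt_arm t kappa i / (N%:R * cbar * pmin)
  * (gamma / (hprob gamma eps K w i * Ssum eps K)).

Definition update (t : nat) (w : {ffun 'I_K -> R}) (kappa : {ffun 'I_N -> 'I_K})
  : {ffun 'I_K -> R} :=
  [ffun i => w i * powR (1 + delta) (Vhat t w kappa i)].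

(* Expected revenue collected in rounds t, t+1, ..., t+m-1 (1-based rounds),
   starting with weights w: in each round the offers kappa_{t,n} are drawn
   independently over n from h_t, revenue is collected, weights updated. *)
Fixpoint exp_rev (m t : nat) (w : {ffun 'I_K -> R}) : R :=
  match m with
  | 0 => 0
  | m'.+1 =>
      \sum_(kappa : {ffun 'I_N -> 'I_K})
        (\prod_(n < N) hprob gamma eps K w (kappa n)) *
        (round_rev t kappa + exp_rev m' t.+1 (update t w kappa))
  end.
End Round.

Definition expected_policy_revenue (N T : nat) (cbar pmin eps Ebar gamma delta : R)
  (c : nat -> nat -> R) (z : nat -> nat -> R -> R) : R :=
  exp_rev N cbar pmin eps gamma delta c z (Kn pmin eps Ebar) T 1 [ffun => 1].

Definition Phi (N : nat) (cbar pmin Ebar eps delta gamma : R) : R :=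
  (1 - gamma) / gamma * ((1 + eps) / eps) * (N%:R * Ebar * cbar / delta)
  * ln (ln (Ebar / pmin) / ln (1 + eps)).

End ESP.

Arguments Kn {R}.
Arguments V_ESP {R}.
Arguments expected_policy_revenue {R}.
Arguments Phi {R}.

(* Main.v *)
Require Import Defs.
From HB Require Import structures.
From mathcomp Require Import all_boot all_order all_algebra.
From mathcomp Require Import all_classical all_reals all_analysis.
From mathcomp.algebra_tactics Require Import ring lra.
Import Order.TTheory GRing.Theory Num.Theory.
Import numFieldNormedType.Exports.
Local Open Scope classical_set_scope.
Local Open Scope ring_scope.

Lemma ln1D_ge (R : realType) (d : R) : 0 <= d -> d - d ^+ 2 / 2 <= ln (1 + d).
Proof.
move=> d0.
pose f : R -> R := ((@ln R - (2:R) \*: (@id R) : R -> R) + ((2^-1 : R) \*: ((@id R : R -> R) ^+ 2)))%R.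
have der (x : R) : 0 < x -> is_derive x 1 f (x^-1 - 2 + x).
  move=> x0.
  apply: is_derive_eq.
    apply: is_deriveD; first apply: is_deriveB.
    exact: is_derive1_ln.
  rewrite /= expr1; congr (_ + _).
    by rewrite [_%:A]/GRing.scale /= mulr1.
  rewrite [X in _ *: X]/GRing.scale /= [X in X = _]/GRing.scale /=.
  by rewrite mulr1 mulrA mulVf ?pnatr_eq0 // mul1r.
have cont : {within `[1, 1 + d], continuous f}.
  apply: derivable_within_continuous => x /[!in_itv] /= /andP[x1 _].
  apply: ex_derive; apply: der; lra.
have [|c /[!in_itv] /= /andP[c1 c2] H] := @MVT_segment R f (fun x => x^-1 - 2 + x) _ _ (ler_wpDr d0 (lexx 1)) _ cont.
  by move=> x /[!in_itv] /= /andP[x1 _]; apply: der; lra.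
have c0 : 0 < c by lra.
have dc : 0 <= c^-1 - 2 + c.
  have : c^-1 * c = 1 by rewrite mulVf // gt_eqF.
  nra.
have : 0 <= f (1 + d) - f 1 by rewrite H; apply: mulr_ge0 => //; lra.
rewrite /f !fctE /= ln1 /GRing.scale /= !expr2 => h.
have e : forall y : R, 2^-1 * y = y / 2 by move=> y; rewrite mulrC.
rewrite !e in h.
rewrite mulrDl !mulrDr !mul1r !mulr1 in h.
lra.
Qed.

Lemma powR_le_lin (R : realType) (d x : R) : 0 <= d -> 0 <= x <= 1 ->
  (1 + d) `^ x <= 1 + d * x.
Proof.
move=> d0 /andP[x0 x1].
have [->|xn0] := eqVneq x 0; first by rewrite powRr0 mulr0 addr0.
have [->|xn1] := eqVneq x 1; first by rewrite powRr1 ?mulr1 //; lra.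
have xp : 0 < x by rewrite lt_neqAle eq_sym xn0.
have xl : x < 1 by rewrite lt_neqAle xn1.
have := @conjugate_powR R ((1 + d) `^ x) 1 x^-1 (1 - x)^-1 (powR_ge0 _ _) ler01.
rewrite invr_gt0 xp invr_gt0 subr_gt0 xl !invrK => /(_ isT isT).
rewrite -powRrM mulfV // powRr1; last lra.
rewrite powR1 mul1r mulr1 => H.
have H1 : x + (1 - x) = 1 by ring.
have := H H1; lra.
Qed.

Definition posw (R : realType) K (w : {ffun 'I_K -> R}) := forall i, 0 < w i.
Arguments posw {R K}.

Lemma e1X_ge1 (R : realType) (eps : R) j : 0 < eps -> 1 <= (1 + eps) ^+ j.
Proof. move=> ep0; apply: exprn_ege1; lra. Qed.

Lemma e1X_gt0 (R : realType) (eps : R) j : 0 < eps -> 0 < (1 + eps) ^+ j.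
Proof. move=> ep0; apply: exprn_gt0; lra. Qed.

Lemma S_gt0 (R : realType) (eps : R) K : 0 < eps -> (0 < K)%N -> 0 < Ssum R eps K.
Proof.
move=> ep0; rewrite /Ssum; case: K => // K' _.
rewrite big_ord_recl; apply: ltr_pwDl; first exact: e1X_gt0.
by apply: sumr_ge0 => i _; apply: ltW; apply: e1X_gt0.
Qed.

Lemma V_bnd (R : realType) (N T : nat) (cbar pmin eps : R)
  (c : nat -> nat -> R) (z : nat -> nat -> R -> R) t n j :
  0 < pmin -> 0 < eps ->
  (forall n t, (1 <= n <= N)%N -> (1 <= t <= T)%N -> 0 <= c n t <= cbar) ->
  (forall n t p, (1 <= n <= N)%N -> (1 <= t <= T)%N -> pmin <= p ->
     0 <= z n t p <= 1) ->
  (1 <= t <= T)%N -> (n < N)%N ->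
  0 <= Vtn R pmin eps c z t n.+1 j <= price R pmin eps j * cbar.
Proof.
move=> pm0 ep0 hc hz ht hn.
have hn' : (1 <= n.+1 <= N)%N by rewrite ltn0Sn.
have pp : pmin <= price R pmin eps j.
  by rewrite /price ler_peMr //; [lra | apply: e1X_ge1].
have p0 : 0 <= price R pmin eps j by lra.
have /andP[c0 c1] := hc _ _ hn' ht.
have /andP[z0 z1] := hz _ _ _ hn' ht pp.
rewrite /Vtn; apply/andP; split; first by apply: mulr_ge0 => //; apply: mulr_ge0.
rewrite -mulrA ler_wpM2l //.
by rewrite -[X in _ <= X]mulr1; apply: ler_pM.
Qed.

Lemma W_gt0 (R : realType) K (w : {ffun 'I_K -> R}) : (0 < K)%N -> posw w ->
  0 < \sum_(j < K) w j.
Proof.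
case: K w => // K' w _ pw.
rewrite big_ord_recl; apply: ltr_pwDl => //.
by apply: sumr_ge0 => i _; apply: ltW.
Qed.

Section H.
End H.

Lemma h_lb (R : realType) (gamma eps : R) K (w : {ffun 'I_K -> R}) (i : 'I_K) : 0 < gamma < 1 -> 0 < eps -> (0 < K)%N ->
  posw w -> gamma * ((1 + eps) ^+ i.+1 / Ssum R eps K) <= hprob R gamma eps K w i.
Proof.
move=> /andP[g0 g1] ep0 K0 pw; rewrite /hprob lerDr; apply: mulr_ge0; first lra.
by apply: divr_ge0; [apply: ltW | apply: ltW; apply: W_gt0].
Qed.

Lemma h_gt0 (R : realType) (gamma eps : R) K (w : {ffun 'I_K -> R}) (i : 'I_K) : 0 < gamma < 1 -> 0 < eps -> (0 < K)%N ->
  posw w -> 0 < hprob R gamma eps K w i.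
Proof.
move=> hg ep0 K0 pw; apply: lt_le_trans (@h_lb _ _ _ _ w i hg ep0 K0 pw).
case/andP: hg => g0 _.
by apply: mulr_gt0 => //; apply: divr_gt0; [apply: e1X_gt0 | apply: S_gt0].
Qed.

Lemma h_ub (R : realType) (gamma eps : R) K (w : {ffun 'I_K -> R}) (i : 'I_K) : 0 < gamma < 1 -> 0 < eps -> (0 < K)%N ->
  posw w -> (1 - gamma) * (w i / \sum_(j < K) w j) <= hprob R gamma eps K w i.
Proof.
move=> /andP[g0 g1] ep0 K0 pw; rewrite /hprob lerDl; apply: mulr_ge0; first lra.
by apply: divr_ge0; [apply: ltW; apply: e1X_gt0 | apply: ltW; apply: S_gt0].
Qed.

Lemma h_sum (R : realType) (gamma eps : R) K (w : {ffun 'I_K -> R}) : 0 < eps -> (0 < K)%N ->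
  posw w -> \sum_(i < K) hprob R gamma eps K w i = 1.
Proof.
move=> ep0 K0 pw; rewrite /hprob big_split /= -!mulr_sumr -!mulr_suml.
rewrite divff ?gt_eqF ?W_gt0 //.
rewrite -/(Ssum R eps K) divff ?gt_eqF ?S_gt0 //; ring.
Qed.

Lemma Va_bnd (R : realType) (N T : nat) (cbar pmin eps : R)
  (c : nat -> nat -> R) (z : nat -> nat -> R -> R) K t
  (kappa : {ffun 'I_N -> 'I_K}) (i : 'I_K) :
  0 < cbar -> 0 < pmin -> 0 < eps ->
  (forall n t, (1 <= n <= N)%N -> (1 <= t <= T)%N -> 0 <= c n t <= cbar) ->
  (forall n t p, (1 <= n <= N)%N -> (1 <= t <= T)%N -> pmin <= p ->
     0 <= z n t p <= 1) ->
  (1 <= t <= T)%N ->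
  0 <= Vt_arm R N pmin eps c z K t kappa i <= N%:R * (price R pmin eps i.+1 * cbar).
Proof.
move=> cb0 pm0 ep0 hc hz ht; rewrite /Vt_arm; apply/andP; split.
  apply: sumr_ge0 => n _; apply: mulr_ge0; last by case: eqP.
  by case/andP: (@V_bnd _ _ _ _ _ _ _ _ _ _ (kappa n).+1 pm0 ep0 hc hz ht (ltn_ord n)).
rewrite -[X in _ <= X](_ : \sum_(n < N) (price R pmin eps i.+1 * cbar) = _); last first.
  by rewrite sumr_const card_ord mulr_natl.
apply: ler_sum => n _.
case: eqP => [->|_]; last first.
  rewrite mulr0; apply: mulr_ge0; last by apply: ltW.
  by rewrite /price; apply: mulr_ge0; [apply: ltW | apply: ltW; apply: e1X_gt0].
by rewrite mulr1; case/andP: (@V_bnd _ _ _ _ _ _ _ _ _ _ i.+1 pm0 ep0 hc hz ht (ltn_ord n)).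
Qed.

Lemma Vhat_bnd (R : realType) (N T : nat) (cbar pmin eps gamma : R)
  (c : nat -> nat -> R) (z : nat -> nat -> R -> R) K t (w : {ffun 'I_K -> R})
  (kappa : {ffun 'I_N -> 'I_K}) (i : 'I_K) :
  (1 <= N)%N -> 0 < cbar -> 0 < pmin -> 0 < eps -> 0 < gamma < 1 -> (0 < K)%N ->
  (forall n t, (1 <= n <= N)%N -> (1 <= t <= T)%N -> 0 <= c n t <= cbar) ->
  (forall n t p, (1 <= n <= N)%N -> (1 <= t <= T)%N -> pmin <= p ->
     0 <= z n t p <= 1) ->
  (1 <= t <= T)%N -> posw w ->
  0 <= Vhat R N cbar pmin eps gamma c z K t w kappa i <= 1.
Proof.
move=> N1 cb0 pm0 ep0 hg K0 hc hz ht pw.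
have /andP[A0 A1] := @Va_bnd _ _ _ _ _ _ _ _ _ _ kappa i cb0 pm0 ep0 hc hz ht.
have hl := @h_lb _ _ _ _ w i hg ep0 K0 pw.
have h0 := @h_gt0 _ _ _ _ w i hg ep0 K0 pw.
have S0 := @S_gt0 _ _ K ep0 K0.
have N0 : 0 < N%:R :> R by rewrite ltr0n.
have E0 := @e1X_gt0 _ _ i.+1 ep0.
case/andP: hg => g0 g1.
move: A0 A1 hl h0 S0 N0 E0.
rewrite /Vhat /price.
set A := Vt_arm _ _ _ _ _ _ _ _ _ _.
set hh := hprob _ _ _ _ _ _.
set E := (1 + eps) ^+ i.+1.
set SS := Ssum _ _ _.
move=> A0 A1 hl h0 S0 N0 E0.
have D0 : 0 < N%:R * cbar * pmin by rewrite !mulr_gt0.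
have -> : A / (N%:R * cbar * pmin) * (gamma / (hh * SS)) =
  (A * gamma) / (N%:R * cbar * pmin * (hh * SS)).
  by field; rewrite !gt_eqF ?mulr_gt0.
apply/andP; split.
  by apply: divr_ge0; [apply: mulr_ge0 | apply: ltW; rewrite !mulr_gt0]; lra.
rewrite ler_pdivrMr ?mul1r; last by rewrite !mulr_gt0.
have h1 : gamma * E <= hh * SS.
  by move: hl; rewrite mulrA ler_pdivrMr.
have h2 : A <= N%:R * cbar * pmin * E.
  by apply: le_trans A1 _; rewrite le_eqVlt; apply/orP; left; apply/eqP; ring.
apply: le_trans (_ : N%:R * cbar * pmin * E * gamma <= _).
  by apply: ler_wpM2r => //; lra.
by rewrite -mulrA [E * _]mulrC ler_wpM2l //; lra.
Qed.

Lemma Va_sum (R : realType) N (pmin eps : R) c z K t (kappa : {ffun 'I_N -> 'I_K}) :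
  \sum_(i < K) Vt_arm R N pmin eps c z K t kappa i = round_rev R N pmin eps c z K t kappa.
Proof.
rewrite /Vt_arm /round_rev exchange_big; apply: eq_bigr => n _ /=.
rewrite -mulr_sumr (bigD1 (kappa n)) //= eqxx big1 ?addr0 ?mulr1 //.
by move=> i /negbTE; rewrite eq_sym => ->.
Qed.

Lemma rev_ge0 (R : realType) (N T : nat) (cbar pmin eps : R)
  (c : nat -> nat -> R) (z : nat -> nat -> R -> R) K t
  (kappa : {ffun 'I_N -> 'I_K}) :
  0 < pmin -> 0 < eps ->
  (forall n t, (1 <= n <= N)%N -> (1 <= t <= T)%N -> 0 <= c n t <= cbar) ->
  (forall n t p, (1 <= n <= N)%N -> (1 <= t <= T)%N -> pmin <= p ->
     0 <= z n t p <= 1) ->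
  (1 <= t <= T)%N ->
  0 <= round_rev R N pmin eps c z K t kappa.
Proof.
move=> pm0 ep0 hc hz ht; apply: sumr_ge0 => n _.
by case/andP: (@V_bnd _ _ _ _ _ _ _ _ _ _ (kappa n).+1 pm0 ep0 hc hz ht (ltn_ord n)).
Qed.

Lemma upd_pos (R : realType) N (cbar pmin eps gamma delta : R) c z K t
  (w : {ffun 'I_K -> R}) (kappa : {ffun 'I_N -> 'I_K}) :
  0 < delta -> posw w -> posw (update R N cbar pmin eps gamma delta c z K t w kappa).
Proof.
move=> d0 pw i; rewrite /update ffunE; apply: mulr_gt0 => //.
by apply: powR_gt0; lra.
Qed.

Lemma ln_upd (R : realType) N (cbar pmin eps gamma delta : R) c z K t
  (w : {ffun 'I_K -> R}) (kappa : {ffun 'I_N -> 'I_K}) (i : 'I_K) :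
  0 < delta -> posw w ->
  ln (update R N cbar pmin eps gamma delta c z K t w kappa i) =
  ln (w i) + Vhat R N cbar pmin eps gamma c z K t w kappa i * ln (1 + delta).
Proof.
move=> d0 pw; rewrite /update ffunE lnM ?ln_powR // posrE //.
by apply: powR_gt0; lra.
Qed.

Lemma Wupd_le (R : realType) (N T : nat) (cbar pmin eps gamma delta : R)
  (c : nat -> nat -> R) (z : nat -> nat -> R -> R) K t (w : {ffun 'I_K -> R})
  (kappa : {ffun 'I_N -> 'I_K}) :
  (1 <= N)%N -> 0 < cbar -> 0 < pmin -> 0 < eps -> 0 < gamma < 1 -> 0 < delta ->
  (0 < K)%N ->
  (forall n t, (1 <= n <= N)%N -> (1 <= t <= T)%N -> 0 <= c n t <= cbar) ->
  (forall n t p, (1 <= n <= N)%N -> (1 <= t <= T)%N -> pmin <= p ->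
     0 <= z n t p <= 1) ->
  (1 <= t <= T)%N -> posw w ->
  \sum_(j < K) update R N cbar pmin eps gamma delta c z K t w kappa j <=
  \sum_(j < K) w j * (1 + delta * gamma / ((1 - gamma) *
     (N%:R * cbar * pmin * Ssum R eps K)) * round_rev R N pmin eps c z K t kappa).
Proof.
move=> N1 cb0 pm0 ep0 hg d0 K0 hc hz ht pw.
set W := \sum_(j < K) w j.
have W0 : 0 < W by apply: W_gt0.
have S0 := @S_gt0 _ _ K ep0 K0.
have N0 : 0 < N%:R :> R by rewrite ltr0n.
have D0 : 0 < N%:R * cbar * pmin * Ssum R eps K by rewrite !mulr_gt0.
case/andP: (hg) => g0 g1.
apply: (@le_trans _ _ (\sum_(j < K) (w j + delta * (w j *
    Vhat R N cbar pmin eps gamma c z K t w kappa j)))).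
  apply: ler_sum => j _; rewrite /update ffunE.
  have /andP[v0 v1] := @Vhat_bnd _ _ _ _ _ _ _ _ _ _ t w kappa j N1 cb0 pm0 ep0 hg K0 hc hz ht pw.
  have := @powR_le_lin _ delta (Vhat R N cbar pmin eps gamma c z K t w kappa j) (ltW d0).
  rewrite v0 v1 => /(_ isT) H.
  have wj := pw j.
  have := ler_wpM2l (ltW wj) H.
  by rewrite mulrDr mulr1 mulrCA.
rewrite big_split /= -mulr_sumr.
rewrite [X in _ <= X](_ : _ = W + delta * gamma / ((1 - gamma) *
     (N%:R * cbar * pmin * Ssum R eps K)) * (W * round_rev R N pmin eps c z K t kappa)); last first.
  rewrite -mulr_suml; rewrite /W; ring.
apply: lerD => //.
rewrite -!mulrA; apply: ler_wpM2l; first lra.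
set Q := ((1 - gamma) * _)^-1.
rewrite -Va_sum !mulr_sumr; apply: ler_sum => j _.
have hu := @h_ub _ _ _ _ w j hg ep0 K0 pw.
have h0 := @h_gt0 _ _ _ _ w j hg ep0 K0 pw.
have /andP[A0 _] := @Va_bnd _ _ _ _ _ _ _ _ _ t kappa j cb0 pm0 ep0 hc hz ht.
rewrite /Vhat.
move: hu h0 A0.
set hh := hprob _ _ _ _ _ _.
set A := Vt_arm _ _ _ _ _ _ _ _ _ _.
rewrite -/W.
move=> hu h0 A0.
have wle : w j <= W * hh / (1 - gamma).
  rewrite ler_pdivlMr; last lra.
  by move: hu; rewrite mulrA ler_pdivrMr // => H; rewrite mulrC [W * _]mulrC.
have q0 : 0 <= A / (N%:R * cbar * pmin) * (gamma / (hh * Ssum R eps K)).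
  apply: mulr_ge0; apply: divr_ge0 => //.
  - by apply: ltW; rewrite !mulr_gt0.
  - lra.
  - by apply: ltW; rewrite !mulr_gt0.
apply: le_trans (ler_wpM2r q0 wle) _.
rewrite /Q.
rewrite le_eqVlt; apply/orP; left; apply/eqP.
field.
by rewrite !gt_eqF //; lra.
Qed.

Lemma E_marg (R : realType) K N (p g : 'I_K -> R) (n : 'I_N) :
  \sum_(i < K) p i = 1 ->
  \sum_(kappa : {ffun 'I_N -> 'I_K}) (\prod_(m < N) p (kappa m)) * g (kappa n)
  = \sum_(i < K) p i * g i.
Proof.
move=> p1.
pose F (m : 'I_N) (j : 'I_K) := if m == n then p j * g j else p j.
have H := bigA_distr_bigA F.
have L : \prod_(m < N) \sum_(j < K) F m j = \sum_(i < K) p i * g i.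
  rewrite (bigD1 n) //= [X in _ * X]big1; last by move=> m /negbTE mn; rewrite /F mn.
  by rewrite mulr1 /F eqxx.
rewrite -L H; apply: eq_bigr => f _; rewrite (bigD1 n) //= [in RHS](bigD1 n) //=.
rewrite /F /= eqxx mulrAC; congr (_ * _); apply: eq_bigr => m /negbTE ->; done.

Qed.

Lemma E_one (R : realType) K N (p : 'I_K -> R) :
  \sum_(i < K) p i = 1 ->
  \sum_(kappa : {ffun 'I_N -> 'I_K}) (\prod_(m < N) p (kappa m)) = 1.
Proof.
move=> p1; rewrite -(bigA_distr_bigA (fun (m : 'I_N) (j : 'I_K) => p j)).
by rewrite big1 // => m _.
Qed.

Lemma E_Vhat (R : realType) (N : nat) (cbar pmin eps gamma : R)
  (c : nat -> nat -> R) (z : nat -> nat -> R -> R) K t (w : {ffun 'I_K -> R})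
  (k : 'I_K) :
  (1 <= N)%N -> 0 < cbar -> 0 < pmin -> 0 < eps -> 0 < gamma < 1 -> (0 < K)%N ->
  posw w ->
  \sum_(kappa : {ffun 'I_N -> 'I_K})
     (\prod_(m < N) hprob R gamma eps K w (kappa m)) *
     Vhat R N cbar pmin eps gamma c z K t w kappa k
  = (\sum_(n < N) Vtn R pmin eps c z t n.+1 k.+1) * gamma /
     (N%:R * cbar * pmin * Ssum R eps K).
Proof.
move=> N1 cb0 pm0 ep0 hg K0 pw.
have h0 := @h_gt0 _ _ _ _ w k hg ep0 K0 pw.
have hs := @h_sum _ gamma _ _ w ep0 K0 pw.
have S0 := @S_gt0 _ _ K ep0 K0.
have N0 : 0 < N%:R :> R by rewrite ltr0n.
rewrite /Vhat.
under eq_bigr do rewrite mulrA.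
rewrite -mulr_suml.
under eq_bigr do rewrite mulrA.
rewrite -mulr_suml /Vt_arm.
under eq_bigr do rewrite mulr_sumr.
rewrite exchange_big /=.
under eq_bigr => n _ do rewrite (@E_marg _ _ _ _ (fun i : 'I_K => Vtn R pmin eps c z t n.+1 i.+1 * (i == k)%:R) n hs).
have E (n : nat) : \sum_(i < K) hprob R gamma eps K w i *
     (Vtn R pmin eps c z t n.+1 i.+1 * (i == k)%:R) =
     hprob R gamma eps K w k * Vtn R pmin eps c z t n.+1 k.+1.
  rewrite (bigD1 k) //= eqxx mulr1 big1 ?addr0 //.
  by move=> i /negbTE ->; rewrite mulr0 mulr0.
under eq_bigr => n _ do rewrite E.
rewrite -mulr_sumr.
field.
by rewrite !gt_eqF //; lra.
Qed.

Lemma main_ind (R : realType) (N T : nat) (cbar pmin eps gamma delta : R)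
  (c : nat -> nat -> R) (z : nat -> nat -> R -> R) K (k : 'I_K) :
  (1 <= N)%N -> 0 < cbar -> 0 < pmin -> 0 < eps -> 0 < gamma < 1 -> 0 < delta ->
  (0 < K)%N ->
  (forall n t, (1 <= n <= N)%N -> (1 <= t <= T)%N -> 0 <= c n t <= cbar) ->
  (forall n t p, (1 <= n <= N)%N -> (1 <= t <= T)%N -> pmin <= p ->
     0 <= z n t p <= 1) ->
  forall m t (w : {ffun 'I_K -> R}), posw w -> (1 <= t)%N -> (t + m <= T.+1)%N ->
  ln (1 + delta) * gamma / (N%:R * cbar * pmin * Ssum R eps K) *
    \sum_(s < m) \sum_(n < N) Vtn R pmin eps c z (t + s) n.+1 k.+1
  <= delta * gamma / ((1 - gamma) * (N%:R * cbar * pmin * Ssum R eps K)) *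
     exp_rev R N cbar pmin eps gamma delta c z K m t w
     + ln (\sum_(j < K) w j) - ln (w k).
Proof.
move=> N1 cb0 pm0 ep0 hg d0 K0 hc hz.
set D := N%:R * cbar * pmin * Ssum R eps K.
set a := delta * gamma / ((1 - gamma) * D).
set b := ln (1 + delta) * gamma / D.
have S0 := @S_gt0 _ _ K ep0 K0.
have N0 : 0 < N%:R :> R by rewrite ltr0n.
have D0 : 0 < D by rewrite /D !mulr_gt0.
case/andP: (hg) => g0 g1.
have a0 : 0 <= a by apply: divr_ge0; [apply: mulr_ge0 | apply: mulr_ge0]; lra.
elim=> [|m IH] t w pw t1 tm.
  rewrite big_ord0 mulr0 /= mulr0 add0r subr_ge0.
  rewrite ler_ln ?posrE ?W_gt0 //.
  by rewrite (bigD1 k) //= lerDl; apply: sumr_ge0 => i _; apply: ltW.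
have tT : (1 <= t <= T)%N by rewrite t1 /=; move: tm; rewrite addnS ltnS; apply: leq_trans; rewrite leq_addr.
rewrite big_ord_recl addn0 /=.
set W := \sum_(j < K) w j.
have W0 : 0 < W by apply: W_gt0.
set P := fun kappa : {ffun 'I_N -> 'I_K} => \prod_(n < N) hprob R gamma eps K w (kappa n).
have hs := @h_sum _ gamma _ _ w ep0 K0 pw.
have P1 : \sum_(kappa : {ffun 'I_N -> 'I_K}) P kappa = 1 by apply: E_one.
have P0 kappa : 0 <= P kappa.
  by apply: prodr_ge0 => n _; apply: ltW; apply: h_gt0.
set Sig := \sum_(i < m) _.
have -> : Sig = \sum_(s < m) \sum_(n < N) Vtn R pmin eps c z (t.+1 + s) n.+1 k.+1.
  by apply: eq_bigr => s _; rewrite /bump /= add1n addnS addSn.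
set r := round_rev R N pmin eps c z K t.
set e := fun kappa => exp_rev R N cbar pmin eps gamma delta c z K m t.+1
   (update R N cbar pmin eps gamma delta c z K t w kappa).
set vh := Vhat R N cbar pmin eps gamma c z K t w.
have pointwise kappa :
  b * (\sum_(s < m) \sum_(n < N) Vtn R pmin eps c z (t.+1 + s) n.+1 k.+1)
    + ln (1 + delta) * vh kappa k
  <= a * (r kappa + e kappa) + ln W - ln (w k).
  have pw' := @upd_pos _ N cbar pmin eps gamma _ c z K t w kappa d0 pw.
  have tm1 : (t + m < T.+1)%N by rewrite -addnS.
  have := IH t.+1 _ pw' (leq_trans t1 (leqnSn t)); rewrite addSn => /(_ tm1).
  rewrite -/a -/b -/(e kappa) ln_upd // -/vh => H.
  have Wl : ln (\sum_(j < K) update R N cbar pmin eps gamma delta c z K t w kappa j)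
     <= ln W + a * r kappa.
    have r0 : 0 <= r kappa by apply: (@rev_ge0 _ _ T cbar); rewrite //.
    have := @Wupd_le _ _ _ _ _ _ _ _ c z K t w kappa N1 cb0 pm0 ep0 hg d0 K0 hc hz tT pw.
    rewrite -/D -/a -/r -mulr_suml -/W => Hle.
    have ar0 : 0 < 1 + a * r kappa by have := mulr_ge0 a0 r0; lra.
    apply: le_trans (_ : ln (W * (1 + a * r kappa)) <= _).
      rewrite ler_ln ?posrE ?mulr_gt0 //; apply: W_gt0 => //.
    rewrite lnM ?posrE // lerD2l; apply: le_ln1Dx.
    by have := mulr_ge0 a0 r0; lra.
  rewrite mulrDr; lra.
have -> : a * \sum_(kappa : {ffun 'I_N -> 'I_K}) P kappa * (r kappa + e kappa)
   + ln W - ln (w k) =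
   \sum_(kappa : {ffun 'I_N -> 'I_K}) P kappa * (a * (r kappa + e kappa) + ln W - ln (w k)).
  rewrite -addrA -[ln W - _]mul1r -P1 mulr_suml mulr_sumr -big_split /=.
  by apply: eq_bigr => kappa _; ring.
have E := @E_Vhat _ N cbar pmin eps gamma c z K t w k N1 cb0 pm0 ep0 hg K0 pw.
rewrite -/P -/vh in E.
rewrite mulrDr. have -> : b * \sum_(n < N) Vtn R pmin eps c z t n.+1 k.+1 +
   b * (\sum_(s < m) \sum_(n < N) Vtn R pmin eps c z (t.+1 + s) n.+1 k.+1) =
   \sum_(kappa : {ffun 'I_N -> 'I_K}) P kappa *
     (b * (\sum_(s < m) \sum_(n < N) Vtn R pmin eps c z (t.+1 + s) n.+1 k.+1)
      + ln (1 + delta) * vh kappa k).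
  apply/esym; under eq_bigr do rewrite mulrDr.
  rewrite big_split /= -mulr_suml P1 mul1r addrC; congr (_ + _).
  under eq_bigr do rewrite mulrCA.
  by rewrite -mulr_sumr E /b -/D; field; rewrite gt_eqF.
by apply: ler_sum => kappa _; apply: ler_wpM2l; [apply: P0 | apply: pointwise].
Qed.

Lemma geo (R : realType) (eps : R) K :
  eps * Ssum R eps K = (1 + eps) ^+ K.+1 - (1 + eps).
Proof.
elim: K => [|K IH]; first by rewrite /Ssum big_ord0 mulr0 expr1 subrr.
rewrite /Ssum big_ord_recr /= mulrDr -/(Ssum R eps K) IH.
rewrite !exprS; ring.
Qed.

Theorem lemma7 (R : realType) (N T : nat) (cbar pmin eps Ebar : R)
  (c : nat -> nat -> R) (z : nat -> nat -> R -> R) (gamma delta : R) :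
  (1 <= N)%N -> (1 <= T)%N ->
  0 < cbar -> 0 < pmin -> 0 < eps -> pmin * (1 + eps) <= Ebar ->
  (forall n t, (1 <= n <= N)%N -> (1 <= t <= T)%N -> 0 <= c n t <= cbar) ->
  (forall n t p, (1 <= n <= N)%N -> (1 <= t <= T)%N -> pmin <= p ->
     0 <= z n t p <= 1) ->
  0 < gamma < 1 -> 0 < delta ->
  forall k : 'I_(Kn pmin eps Ebar),
    expected_policy_revenue N T cbar pmin eps Ebar gamma delta c z >=
    (1 - gamma) * (1 - delta / 2) * V_ESP N T pmin eps c z k.+1
    - Phi N cbar pmin Ebar eps delta gamma.
Proof.
move=> N1 T1 cb0 pm0 ep0 hE hc hz hg d0 k.
set K := Kn pmin eps Ebar in k *.
have K0 : (0 < K)%N by apply: leq_ltn_trans (leq0n k) (ltn_ord k).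
case/andP: (hg) => g0 g1.
set D := N%:R * cbar * pmin * Ssum R eps K.
set a := delta * gamma / ((1 - gamma) * D).
set b := ln (1 + delta) * gamma / D.
have S0 := @S_gt0 _ _ K ep0 K0.
have N0 : 0 < N%:R :> R by rewrite ltr0n.
have D0 : 0 < D by rewrite /D !mulr_gt0.
have a0 : 0 < a by apply: divr_gt0; apply: mulr_gt0 => //; lra.
have pw : posw ([ffun => 1] : {ffun 'I_K -> R}) by move=> i; rewrite ffunE.
have H := @main_ind R N T cbar pmin eps gamma delta c z K k N1 cb0 pm0 ep0 hg d0 K0
  hc hz T 1 _ pw (leqnn 1) (leqnn T.+1).
rewrite -/D -/a -/b in H.
have e1 : \sum_(j < K) ([ffun => 1] : {ffun 'I_K -> R}) j = K%:R.
  by under eq_bigr do rewrite ffunE; rewrite sumr_const card_ord.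
rewrite e1 ffunE ln1 subr0 in H.
have e2 : \sum_(s < T) \sum_(n < N) Vtn R pmin eps c z (1 + s) n.+1 k.+1 =
   V_ESP N T pmin eps c z k.+1.
  by rewrite /V_ESP exchange_big /=; apply: eq_bigr => s _; apply: eq_bigr => n _; rewrite add1n.
rewrite e2 in H.
rewrite /expected_policy_revenue -/K.
move: H.
set E := exp_rev _ _ _ _ _ _ _ _ _ _ _ _ _.
set V := V_ESP _ _ _ _ _ _ _.
move=> H.
have V0 : 0 <= V.
  apply: sumr_ge0 => n _; apply: sumr_ge0 => t _.
  have tT : (1 <= t.+1 <= T)%N by rewrite ltn0Sn ltn_ord.
  by case/andP: (@V_bnd _ _ _ _ _ _ _ _ _ _ k.+1 pm0 ep0 hc hz tT (ltn_ord n)).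
set x := ln (Ebar / pmin) / ln (1 + eps).
have l0 : 0 < ln (1 + eps) by apply: ln_gt0; lra.
have Ep : 1 + eps <= Ebar / pmin by rewrite ler_pdivlMr // mulrC.
have x1 : 1 <= x.
  by rewrite /x ler_pdivlMr // mul1r ler_ln ?posrE //; try lra.
have Kx : K%:R <= x by rewrite /K /Kn -/x truncn_le; lra.
clearbody K.
have Kpos : 0 < K%:R :> R by rewrite ltr0n.
have lnKx : ln K%:R <= ln x by rewrite ler_ln ?posrE //; lra.
have L0 : 0 <= ln x by apply: ln_ge0.
have Eb0 : 0 < Ebar by apply: lt_le_trans hE; apply: mulr_gt0; lra.
have PK : pmin * (1 + eps) ^+ K <= Ebar.
  have : (1 + eps) ^+ K <= Ebar / pmin.
    rewrite -[X in X ^+ K]lnK ?posrE; last lra.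
    rewrite -expRM_natl.
    rewrite -[X in _ <= X]lnK ?posrE; last by apply: divr_gt0.
    by rewrite ler_expR -ler_pdivlMr.
  by rewrite ler_pdivlMr // mulrC.
have hS : eps * (pmin * Ssum R eps K) <= (1 + eps) * Ebar.
  rewrite mulrCA geo exprS.
  have e0 : 0 <= pmin * (1 + eps) by apply: mulr_ge0; lra.
  have : pmin * ((1 + eps) * (1 + eps) ^+ K) <= (1 + eps) * Ebar.
    by rewrite mulrCA ler_wpM2l //; lra.
  rewrite mulrBr; lra.
have aPhi : ln K%:R <= a * Phi N cbar pmin Ebar eps delta gamma.
  apply: le_trans lnKx _.
  have -> : a * Phi N cbar pmin Ebar eps delta gamma =
    ln x * ((1 + eps) * (N%:R * Ebar * cbar) / (eps * D)).
    rewrite /a /Phi -/x; field.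
    by rewrite !gt_eqF //; lra.
  rewrite -[X in X <= _]mulr1 ler_wpM2l //.
  rewrite ler_pdivlMr ?mul1r ?mulr_gt0 //.
  have e : eps * D = N%:R * cbar * (eps * (pmin * Ssum R eps K)) by rewrite /D; ring.
  have e' : (1 + eps) * (N%:R * Ebar * cbar) = N%:R * cbar * ((1 + eps) * Ebar) by ring.
  by rewrite e e' ler_wpM2l //; apply: ltW; apply: mulr_gt0.
have ab : a * ((1 - gamma) * (1 - delta / 2)) <= b.
  have hl := @ln1D_ge R delta (ltW d0).
  have -> : a * ((1 - gamma) * (1 - delta / 2)) = (delta - delta ^+ 2 / 2) * gamma / D.
    by rewrite /a; field; rewrite !gt_eqF //; lra.
  rewrite /b ler_pM2r ?invr_gt0 // ler_pM2r //.
have : a * ((1 - gamma) * (1 - delta / 2) * V - Phi N cbar pmin Ebar eps delta gamma)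
   <= a * E.
  rewrite mulrBr mulrA.
  have := ler_wpM2r V0 ab.
  lra.
by rewrite ler_pM2l.
Qed.
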